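(* Let $\mathcal X$ be a finite set with $N=|\mathcal X|\ge 2$, let $c\in(0,1/N]$ and $\varepsilon\ge 0$. If a Markov kernel $K$ from $\mathcal X$ to a finite set $\mathcal Y$ satisfies $K\in\mathcal M(\varepsilon,c)$, then $$\eta_{\mathrm{TV}}(K)\le \min\left\{\frac{e^\varepsilon-1}{e^\varepsilon(1-Nc)+1},\,1\right\}.$$
   Context: A Markov kernel (mechanism) $K$ from $\mathcal X$ to $\mathcal Y$ is a row-stochastic $|\mathcal X|\times|\mathcal Y|$ matrix with entries $K_{Y|X=x}(y)$; for a distribution $P_X$ on $\mathcal X$, $(K\circ P_X)(y)=\sum_x K_{Y|X=x}(y)P_X(x)$. For $P_X$ with full support and $y$ with $(K\circ P_X)(y)>0$, the pointwise maximal leakage (PML) is $\ell_{K\times P_X}(X\to y)=\log\frac{\max_{x\in\mathcal X}K_{Y|X=x}(y)}{(K\circ P_X)(y)}$ (natural log). For $c\in(0,1/N]$, $\mathcal Q_{\mathcal X}(c)=\{P_X\in\mathcal P(\mathcal X):\min_x P_X(x)\ge c\}$. For a set $\mathcal P$ of distributions, $C(K,\mathcal P)=\sup_{P_X\in\mathcal P}\sup_{y:(K\circ P_X)(y)>0}\ell_{K\times P_X}(X\to y)$. $\mathcal M(\varepsilon,c)$ is the set of all kernels $K$ from $\mathcal X$ to some finite output set with $C(K,\mathcal Q_{\mathcal X}(c))\le\varepsilon$ (said to satisfy $(\varepsilon,c)$-PML). The Dobrushin coefficient is $\eta_{\mathrm{TV}}(K)=\sup_{P_X\neq Q_X}\frac{\mathrm{TV}(K\circ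 P_X\|K\circ Q_X)}{\mathrm{TV}(P_X\|Q_X)}=\max_{x\neq x'}\mathrm{TV}(K_{Y|X=x}\|K_{Y|X=x'})$, with $\mathrm{TV}(P\|Q)=\frac12\sum|P-Q|$. *)

(* Defs.v *)
From HB Require Import structures.
From mathcomp Require Import all_boot all_order all_algebra.
From mathcomp Require Import all_classical all_reals.
From mathcomp Require Import ereal sequences exp.
Set Implicit Arguments. Unset Strict Implicit. Unset Printing Implicit Defensive.
Import Order.TTheory GRing.Theory Num.Theory.
Local Open Scope ring_scope.

Section PML.
Variables (R : realType) (X Y : finType).

Definition is_distr (P : X -> R) : Prop :=
  (forall x, 0 <= P x) /\ \sum_(x : X) P x = 1.

(* A Markov kernel: row-stochastic matrix, K x y = K_{Y|X=x}(y). *)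
Definition is_kernel (K : X -> Y -> R) : Prop :=
  (forall x y, 0 <= K x y) /\ (forall x, \sum_(y : Y) K x y = 1).

Definition push (K : X -> Y -> R) (P : X -> R) (y : Y) : R :=
  \sum_(x : X) K x y * P x.

Definition maxK (K : X -> Y -> R) (y : Y) : R := \big[Num.max/0]_(x : X) K x y.

Definition pml (K : X -> Y -> R) (P : X -> R) (y : Y) : R :=
  ln (maxK K y / push K P y).

Definition Qc (c : R) : set (X -> R) :=
  [set P | is_distr P /\ forall x, c <= P x].

Definition Ccap (K : X -> Y -> R) (Pset : set (X -> R)) : \bar R :=
  ereal_sup [set l | exists P, Pset P /\ exists y, 0 < push K P y /\ l = (pml K P y)%:E].

Definition in_M (eps c : R) (K : X -> Y -> R) : Prop :=
  is_kernel K /\ (Ccap K (Qc c) <= eps%:E)%E.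

Definition TV (P Q : Y -> R) : R := 2^-1 * \sum_(y : Y) `|P y - Q y|.

Definition eta_TV (K : X -> Y -> R) : R :=
  \big[Num.max/0]_(x : X) \big[Num.max/0]_(x' : X | x' != x) TV (K x) (K x').

End PML.

(* Main.v *)
Require Import Defs.
From HB Require Import structures.
From mathcomp Require Import all_boot all_order all_algebra.
From mathcomp Require Import all_classical all_reals.
From mathcomp Require Import ereal sequences exp.
From mathcomp Require Import ring lra.
Import Order.TTheory GRing.Theory Num.Theory.
Local Open Scope ring_scope.

Lemma key (R : realType) (X Y : finType) (c eps : R) (K : X -> Y -> R) :
  0 < c -> c <= (#|X|%:R)^-1 -> in_M eps c K ->
  forall u v y, K u y <= expR eps * (c * \sum_(z : X) K z y + (1 - #|X|%:R * c) * K v y).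
Proof.
move=> c0 cN [[K0 K1] HC] u v y.
have w0 : 0 <= 1 - #|X|%:R * c.
  have Np : 0 < (#|X|%:R : R) by rewrite -invr_gt0; exact: lt_le_trans cN.
  by rewrite subr_ge0 -ler_pdivlMl // mulr1.
set P := fun z : X => c + (if z == v then 1 - #|X|%:R * c else 0).
have pushE : push K P y = c * \sum_(z : X) K z y + (1 - #|X|%:R * c) * K v y.
  rewrite /push /P.
  under eq_bigr => z _ do rewrite mulrDr.
  rewrite big_split /= mulr_sumr; congr (_ + _).
    by apply: eq_bigr => z _; rewrite mulrC.
  rewrite (bigD1 v) //= eqxx big1 ?addr0 ?[_ * K v y]mulrC //.
  by move=> z /negbTE ->; rewrite mulr0.
have QP : Qc c P.
  split; last by move=> x; rewrite /P lerDl; case: ifP.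
  split; first by move=> x; rewrite /P; apply: addr_ge0; [exact: ltW|case: ifP].
  rewrite /P big_split /= sumr_const -big_mkcond /= big_pred1_eq.
  by rewrite -mulr_natr mulrC; ring.
have Ppos : forall z, 0 <= P z by case: QP => [[]].
have [Kp|] := ltP 0 (K u y); last first.
  move=> Kle; apply: le_trans Kle _; apply: mulr_ge0; first exact: ltW (expR_gt0 _).
  by apply: addr_ge0; apply: mulr_ge0 => //; [exact: ltW|apply: sumr_ge0].
have Pu : c <= P u by case: QP.
have pushp : 0 < push K P y.
  rewrite /push (bigD1 u) //=; apply: ltr_pwDl.
    by apply: mulr_gt0 => //; apply: lt_le_trans Pu.
  by apply: sumr_ge0 => z _; apply: mulr_ge0.
have maxge : K u y <= maxK K y.
  rewrite /maxK (bigD1 u) //= le_max lexx //.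
have Hpml : pml K P y <= eps.
  move/ereal_supP: HC => /(_ (pml K P y)%:E).
  by rewrite lee_fin; apply; exists P; split => //; exists y.
have rpos : 0 < maxK K y / push K P y.
  by apply: divr_gt0 => //; apply: lt_le_trans maxge.
have : maxK K y / push K P y <= expR eps.
  by rewrite -(lnK rpos) ler_expR.
rewrite ler_pdivrMr // -pushE mulrC => H.
exact: le_trans maxge H.
Qed.

Theorem theorem1 (R : realType) (X Y : finType) (c eps : R)
  (K : X -> Y -> R) :
  (2 <= #|X|)%N ->
  0 < c -> c <= (#|X|%:R)^-1 ->
  0 <= eps ->
  in_M eps c K ->
  eta_TV K <= Num.min ((expR eps - 1) / (expR eps * (1 - #|X|%:R * c) + 1)) 1.
Proof.
move=> N2 c0 cN e0 HM.
have Hk := @key R X Y c eps K c0 cN HM.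
case: HM => [[K0 K1] _].
set e := expR eps; set w := 1 - #|X|%:R * c.
have Np : 0 < (#|X|%:R : R) by rewrite -invr_gt0; exact: lt_le_trans cN.
have w0 : 0 <= w by rewrite subr_ge0 -ler_pdivlMl // mulr1.
have e1 : 1 <= e by rewrite /e -expR0 ler_expR.
have den : 0 < e * w + 1 by apply: ltr_wpDl => //; apply: mulr_ge0 => //; lra.
have tge0 : 0 <= (e - 1) / (e * w + 1) by apply: divr_ge0; lra.
have bnd0 : 0 <= Num.min ((e - 1) / (e * w + 1)) 1 by rewrite le_min tge0 ler01.
have pair : forall x x', TV (K x) (K x') <= Num.min ((e - 1) / (e * w + 1)) 1.
  move=> x x'.
  set D := \sum_(y : Y) `|K x y - K x' y|.
  have SS : \sum_(y : Y) (K x y + K x' y) = 2.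
    by rewrite big_split /= !K1.
  have D2 : D <= 2.
    rewrite -SS; apply: ler_sum => y _.
    have := K0 x y; have := K0 x' y.
    by move=> ? ?; rewrite ler_norml; apply/andP; split; lra.
  have SN : \sum_(y : Y) \sum_(z : X) K z y = #|X|%:R.
    rewrite exchange_big /=.
    under eq_bigr => z _ do rewrite K1.
    by rewrite sumr_const -mulr_natr mul1r.
  have Hy : forall y, K x y + K x' y + `|K x y - K x' y| <=
      e * (2 * c * \sum_(z : X) K z y + w * (K x y + K x' y - `|K x y - K x' y|)).
    move=> y.
    case: (lerP (K x y) (K x' y)) => h.
      have := Hk x' x y; rewrite -/e -/w.
      set S := \sum_(z : X) K z y => H.
      lra.
    have := Hk x x' y; rewrite -/e -/w.
    set S := \sum_(z : X) K z y => H.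
    lra.
  have Hs : \sum_(y : Y) (K x y + K x' y + `|K x y - K x' y|) <=
      \sum_(y : Y) e * (2 * c * \sum_(z : X) K z y + w * (K x y + K x' y - `|K x y - K x' y|)).
    by apply: ler_sum => y _; exact: Hy.
  rewrite big_split /= SS -/D -mulr_sumr big_split /= -mulr_sumr -mulr_sumr SN in Hs.
  rewrite sumrB SS -/D in Hs.
  have Hw : w = 1 - #|X|%:R * c by [].
  have HD : D * (e * w + 1) <= 2 * (e - 1).
    have : 2 + D <= e * (2 * c * #|X|%:R + w * (2 - D)) by [].
    have -> : 2 * c * #|X|%:R = 2 - 2 * w by rewrite Hw; ring.
    move=> H; nra.
  rewrite /TV -/D le_min; apply/andP; split; last lra.
  rewrite ler_pdivlMr //; lra.
rewrite /eta_TV.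
apply: (big_ind (fun v => v <= _)) => //.
  by move=> a b ha hb; rewrite ge_max ha hb.
move=> x _; apply: (big_ind (fun v => v <= _)) => //.
  by move=> a b ha hb; rewrite ge_max ha hb.
Qed.
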